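(* In the Setting below, for all $u,v,w,t\in V$: $$w\langle u,v\rangle+u\langle v,w\rangle+v\langle w,u\rangle=0,$$ $$\langle w,t\rangle\langle u,v\rangle+\langle u,t\rangle\langle v,w\rangle+\langle v,t\rangle\langle w,u\rangle=0,$$ where in the first identity elements of $U$ act on $V$ on the right, and in the second the products are taken in $U$.
   Context: Setting. Let $\mathbb F$ be a field of characteristic different from $2$ and $3$. A Malcev algebra is an anticommutative algebra $\mathcal M$ over $\mathbb F$ satisfying $(xz)(yt)=((xy)z)t+((yz)t)x+((zt)x)y+((tx)y)z$. Products are left-normed: $xyz=(xy)z$, $xyzt=((xy)z)t$. Put $J(x,y,z)=xyz+yzx+zxy$ (the Jacobian), $\{x,y,z\}=xyz-xzy+2x(yz)$, and $h(y,z,t,x,u)=\{yz,t,u\}x+\{yz,t,x\}u+\{yx,z,u\}t+\{yu,z,x\}t$. The variety $\mathcal H$ consists of the Malcev algebras satisfying $h(y,z,t,x,u)=0$ identically. The centroid $\Gamma(\mathcal M)$ is the set of linear maps $\alpha$ of $\mathcal M$ (written on the right) with $(xy)\alpha=x(y\alpha)=(x\alpha)y$ for all $x,y$. Put $p(x,y,z,t)=-\{zt,x,y\}-\{yt,z,x\}+\{xt,y,z\}$ and define the operator $\alpha(y,z,t)$ by $x\,\alpha(y,z,t)=p(x,y,z,t)$; for $\mathcal M\in\mathcal H$ these operators lie in $\Gamma(\mathcal M)$. Let $L=\mathfrak{sl}_2(\mathbb F)$ with basis $E,H,F$ and products $EH=E$, $FH=-F$, $EF=\tfrac12 H$. Standing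 assumption: $\mathcal M\in\mathcal H$ contains $L$ as a subalgebra and $mL\neq 0$ for every $0\neq m\in\mathcal M$. Define $N_{\mathcal M}=\{m\in\mathcal M: J(m,a,b)=0\ \forall a,b\in L\}$ and $J_{\mathcal M}=\{m\in\mathcal M:\{m,a,b\}=0\ \forall a,b\in L\}$. Known facts: $\mathcal M=N_{\mathcal M}\oplus J_{\mathcal M}$; $J_{\mathcal M}$ is a direct sum of $2$-dimensional $L$-submodules with bases $\{u,v\}$, $uH=u$, $vH=-v$, $uE=v$, $uF=0$, $vE=0$, $vF=-u$; letting $U$ be the linear span of the operators $\alpha(m,a,b)$ ($m\in\mathcal M$, $a,b\in L$), $U$ is a commutative associative subalgebra of $\Gamma(\mathcal M)$ and $N_{\mathcal M}=\sum_{\alpha\in U}L\alpha\cong L\otimes U$. Let $V=\{w\in J_{\mathcal M}: wH=w\}$, and for $w\in V$ put $w(1)=w$, $w(2)=wE$. There is a skew-symmetric bilinear map $\langle\cdot,\cdot\rangle:V\times V\to U$ with $u(1)v(1)=F\langle u,v\rangle$, $u(1)v(2)=u(2)v(1)=\tfrac12 H\langle u,v\rangle$, $u(2)v(2)=E\langle u,v\rangle$ for all $u,v\in V$. *)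

(* Defs.v *)
From HB Require Import structures.
From mathcomp Require Import all_boot all_order all_algebra.
Set Implicit Arguments. Unset Strict Implicit. Unset Printing Implicit Defensive.
Import GRing.Theory.
Local Open Scope ring_scope.

(* An algebra over F is an F-vector space M with a product mul : M -> M -> M
   (written xy in the paper; products are left-normed). *)
Section Malcev.
Variables (F : fieldType) (M : lmodType F) (mul : M -> M -> M).

Definition mul_bilinear : Prop :=
  (forall (a : F) (x y z : M), mul (a *: x + y) z = a *: mul x z + mul y z) /\
  (forall (a : F) (x y z : M), mul z (a *: x + y) = a *: mul z x + mul z y).

Definition anticommutative : Prop := forall x : M, mul x x = 0.

Definition malcev_identity : Prop :=
  forall x y z t : M,
    mul (mul x z) (mul y t) =
      mul (mul (mul x y) z) t + mul (mul (mul y z) t) x +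
      mul (mul (mul z t) x) y + mul (mul (mul t x) y) z.

Definition trip (x y z : M) : M :=
  mul (mul x y) z - mul (mul x z) y + 2%:R *: mul x (mul y z).

Definition hfun (y z t x u : M) : M :=
  mul (trip (mul y z) t u) x + mul (trip (mul y z) t x) u +
  mul (trip (mul y x) z u) t + mul (trip (mul y u) z x) t.

Definition malcevH : Prop :=
  [/\ mul_bilinear, anticommutative, malcev_identity &
      forall y z t x u : M, hfun y z t x u = 0].

Definition pfun (x y z t : M) : M :=
  - trip (mul z t) x y - trip (mul y t) z x + trip (mul x t) y z.

Definition alpha (y z t : M) : M -> M := fun x => pfun x y z t.

Variables (E H Fe : M).  (* Fe is the basis element F of sl_2 *)

Definition inL (a : M) : Prop :=
  exists c1 c2 c3 : F, a = c1 *: E + c2 *: H + c3 *: Fe.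

Definition sl2_subalgebra : Prop :=
  [/\ (forall c1 c2 c3 : F, c1 *: E + c2 *: H + c3 *: Fe = 0 ->
          [/\ c1 = 0, c2 = 0 & c3 = 0]),
      mul E H = E, mul Fe H = - Fe & mul E Fe = (2%:R)^-1 *: H].

Definition L_faithful : Prop :=
  forall m : M, m <> 0 -> exists a, inL a /\ mul m a <> 0.

Definition inJ (m : M) : Prop :=
  forall a b, inL a -> inL b -> trip m a b = 0.

Definition inV (w : M) : Prop := inJ w /\ mul w H = w.

Definition inU (f : M -> M) : Prop :=
  exists s : seq (F * M * M * M),
    (forall q, q \in s -> inL q.1.2 /\ inL q.2) /\
    (forall x, f x = \sum_(q <- s) q.1.1.1 *: alpha q.1.1.2 q.1.2 q.2 x).

Definition setting : Prop :=
  [/\ (2%:R : F) != 0, (3%:R : F) != 0, malcevH, sl2_subalgebra & L_faithful].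

(* br u v = <u,v> in U, an operator on M acting on the right: x<u,v> = br u v x.
   Skew-symmetric bilinear map V x V -> U with the stated product relations,
   where w(1) = w and w(2) = wE. *)
Definition bracket_ok (br : M -> M -> M -> M) : Prop :=
  [/\ (forall u v, inV u -> inV v -> inU (br u v)),
      (forall (a : F) u u' v, inV u -> inV u' -> inV v ->
         forall x, br (a *: u + u') v x = a *: br u v x + br u' v x),
      (forall (a : F) u v v', inV u -> inV v -> inV v' ->
         forall x, br u (a *: v + v') x = a *: br u v x + br u v' x),
      (forall u v, inV u -> inV v -> forall x, br u v x = - br v u x) &
      (forall u v, inV u -> inV v ->
         [/\ mul u v = br u v Fe,
             mul u (mul v E) = (2%:R)^-1 *: br u v H,
             mul (mul u E) v = (2%:R)^-1 *: br u v H &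
             mul (mul u E) (mul v E) = br u v E])].

End Malcev.

(* Main.v *)
Require Import Defs.
From HB Require Import structures.
From mathcomp Require Import all_boot all_order all_algebra.
Import GRing.Theory.
Local Open Scope ring_scope.
Set Implicit Arguments. Unset Strict Implicit. Unset Printing Implicit Defensive.

Inductive tm := tV of nat | tM of tm & tm | tA of tm & tm | tN of tm | tS of int & tm | t0.
Inductive mon := mV of nat | mM of mon & mon.
Definition ncmp (i j : nat) : comparison := if i == j then Eq else if (i < j)%N then Lt else Gt.
Lemma ncmp_eq i j : ncmp i j = Eq -> i = j.
Proof. by rewrite /ncmp; case: eqP => // _; case: ifP. Qed.

Fixpoint mcmp (a b : mon) : comparison :=
  match a, b with
  | mV i, mV j => ncmp i j
  | mV _, mM _ _ => Lt
  | mM _ _, mV _ => Gt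
  | mM a1 a2, mM b1 b2 =>
    match mcmp a1 b1 with Eq => mcmp a2 b2 | c => c end
  end.

Lemma mcmp_eq a b : mcmp a b = Eq -> a = b.
Proof.
elim: a b => [i|a1 IH1 a2 IH2] [j|b1 b2] //=.
  by move/ncmp_eq ->.
case E1: (mcmp a1 b1) => // /IH2 ->; by rewrite (IH1 _ E1).
Qed.

Definition poly := seq (int * mon).

Definition table (i j : nat) : poly :=
  match i, j with
  | 0%N, 1%N => [:: (1%:Z, mV 0)]
  | 1%N, 0%N => [:: (Negz 0, mV 0)]
  | 2%N, 1%N => [:: (Negz 0, mV 2)]
  | 1%N, 2%N => [:: (1%:Z, mV 2)]
  | 0%N, 2%N => [:: (1%:Z, mV 1)]
  | 2%N, 0%N => [:: (Negz 0, mV 1)]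
  | _, _ => [::]
  end.

Definition mulmon (a b : mon) : poly :=
  match a, b with
  | mV i, mV j => if (i < 3)%N && (j < 3)%N then table i j else
      match ncmp i j with Eq => [::] | Lt => [:: (1%:Z, mM a b)] | Gt => [:: (Negz 0, mM b a)] end
  | _, _ => match mcmp a b with Eq => [::] | Lt => [:: (1%:Z, mM a b)] | Gt => [:: (Negz 0, mM b a)] end
  end.

Definition scalep (c : int) (p : poly) : poly := [seq (c * q.1, q.2) | q <- p].

Definition mulp (p q : poly) : poly :=
  flatten [seq flatten [seq scalep (a.1 * b.1) (mulmon a.2 b.2) | b <- q] | a <- p].

Fixpoint nf (t : tm) : poly :=
  match t with
  | tV n => [:: (1%:Z, mV n)]
  | tM a b => mulp (nf a) (nf b)
  | tA a b => nf a ++ nf b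
  | tN a => scalep (-1) (nf a)
  | tS z a => scalep z (nf a)
  | t0 => [::]
  end.

Fixpoint ins (q : int * mon) (p : poly) : poly :=
  match p with
  | [::] => [:: q]
  | r :: p' => if mcmp q.2 r.2 is Eq then (q.1 + r.1, r.2) :: p' else r :: ins q p'
  end.

Definition collect (p : poly) : poly := foldr ins [::] p.

Definition iszero (t : tm) : bool := all (fun q => q.1 == 0) (collect (nf t)).

Section Eval.
Variables (F : fieldType) (M : lmodType F) (mul : M -> M -> M).
Hypotheses (mDl : forall x y z, mul (x + y) z = mul x z + mul y z)
           (mDr : forall x y z, mul z (x + y) = mul z x + mul z y)
           (manti : forall x, mul x x = 0).
Variables (e0 e1 e2 : M) (env : seq M).
Hypotheses (h01 : mul e0 e1 = e0) (h21 : mul e2 e1 = - e2) (h02 : mul e0 e2 = e1).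

Definition ev n := nth 0 [:: e0, e1, e2 & env] n.

Fixpoint eval (t : tm) : M :=
  match t with
  | tV n => ev n
  | tM a b => mul (eval a) (eval b)
  | tA a b => eval a + eval b
  | tN a => - eval a
  | tS z a => eval a *~ z
  | t0 => 0
  end.

Fixpoint evalm (m : mon) : M :=
  match m with mV n => ev n | mM a b => mul (evalm a) (evalm b) end.

Definition evalp (p : poly) : M := \sum_(q <- p) evalm q.2 *~ q.1.

Lemma mm0l z : mul 0 z = 0.
Proof. have h := mDl 0 0 z; rewrite addr0 in h; apply: (addrI (mul 0 z)); by rewrite -h addr0. Qed.
Lemma mm0r z : mul z 0 = 0.
Proof. have h := mDr 0 0 z; rewrite addr0 in h; apply: (addrI (mul z 0)); by rewrite -h addr0. Qed.
Lemma mmNl x z : mul (- x) z = - mul x z.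
Proof. by apply/eqP; rewrite -addr_eq0 -mDl addNr mm0l. Qed.
Lemma mmNr x z : mul z (- x) = - mul z x.
Proof. by apply/eqP; rewrite -addr_eq0 -mDr addNr mm0r. Qed.
Lemma mmnl x z n : mul (x *+ n) z = mul x z *+ n.
Proof. by elim: n => [|n IH]; rewrite ?mm0l // !mulrS mDl IH. Qed.
Lemma mmnr x z n : mul z (x *+ n) = mul z x *+ n.
Proof. by elim: n => [|n IH]; rewrite ?mm0r // !mulrS mDr IH. Qed.
Lemma mmzl x z (c : int) : mul (x *~ c) z = mul x z *~ c.
Proof. by case: c => n; rewrite ?NegzE ?mulrNz -?pmulrn ?mmNl mmnl. Qed.
Lemma mmzr x z (c : int) : mul z (x *~ c) = mul z x *~ c.
Proof. by case: c => n; rewrite ?NegzE ?mulrNz -?pmulrn ?mmNr mmnr. Qed.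
Lemma manti2 x y : mul x y = - mul y x.
Proof.
by apply/eqP; rewrite -addr_eq0; have := manti (x + y); rewrite mDl !mDr !manti add0r addr0 => ->.
Qed.

Lemma evalp_cat p q : evalp (p ++ q) = evalp p + evalp q.
Proof. by rewrite /evalp big_cat. Qed.
Lemma evalp_scale c p : evalp (scalep c p) = evalp p *~ c.
Proof.
rewrite /evalp big_map; elim: p => [|q p IH]; rewrite ?big_nil ?mul0rz // !big_cons IH.
by rewrite mulrzDl -mulrzA mulrC.
Qed.
Lemma evalp_flatten s : evalp (flatten s) = \sum_(p <- s) evalp p.
Proof. elim: s => [|p s IH]; first by rewrite big_nil /evalp big_nil. by rewrite big_cons -IH -evalp_cat. Qed.

Lemma genE a b c : (c = Eq -> a = b) ->
   evalp (match c with Eq => [::] | Lt => [:: (1%:Z, mM a b)] | Gt => [:: (Negz 0, mM b a)] end)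
   = mul (evalm a) (evalm b).
Proof.
case: c => H; rewrite /evalp ?big_nil ?big_cons ?big_nil /= ?addr0.
- by rewrite H // manti.
- by rewrite mulr1z.
- by rewrite manti2 mulrN1z opprK.
Qed.

Lemma mulmonE a b : evalp (mulmon a b) = mul (evalm a) (evalm b).
Proof.
case: a => [i|a1 a2]; case: b => [j|b1 b2] /=.
- case: ifP => [/andP[]|_]; last first.
    by rewrite -[mul (ev i) (ev j)]/(mul (evalm (mV i)) (evalm (mV j))); apply: genE => /ncmp_eq ->.
  rewrite /evalp.
  case: i => [|[|[|i]]] // _; case: j => [|[|[|j]]] // _ /=;
    rewrite ?big_nil ?big_cons ?big_nil /= ?addr0 ?manti //= /ev /= ?mulr1z ?mulrN1z;
    rewrite ?h01 ?h02 ?h21 //; rewrite manti2 ?h01 ?h02 ?h21 ?opprK //.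
- by rewrite /evalp big_cons big_nil /= addr0 mulr1z.
- by rewrite /evalp big_cons big_nil /= addr0 mulrN1z manti2 opprK.
- by apply: (genE (c := mcmp (mM a1 a2) (mM b1 b2))); exact: mcmp_eq.
Qed.

Lemma evalp_cons q p : evalp (q :: p) = evalm q.2 *~ q.1 + evalp p.
Proof. by rewrite /evalp big_cons. Qed.
Lemma evalp_nil : evalp [::] = 0.
Proof. by rewrite /evalp big_nil. Qed.

Lemma evalp_mulp p q : evalp (mulp p q) = mul (evalp p) (evalp q).
Proof.
elim: p => [|a p IH]; first by rewrite evalp_nil mm0l.
have -> : mulp (a :: p) q = flatten [seq scalep (a.1 * b.1) (mulmon a.2 b.2) | b <- q] ++ mulp p q by [].
rewrite evalp_cat IH evalp_cons mDl; congr (_ + _); clear IH.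
elim: q => [|b q IHq]; first by rewrite evalp_nil mm0r.
have -> : flatten [seq scalep (a.1 * b.1) (mulmon a.2 b.2) | b <- b :: q] =
  scalep (a.1 * b.1) (mulmon a.2 b.2) ++ flatten [seq scalep (a.1 * b.1) (mulmon a.2 b.2) | b <- q] by [].
rewrite evalp_cat IHq evalp_cons mDr; congr (_ + _).
rewrite evalp_scale mulmonE mmzr mmzl -!mulrzA; congr (_ *~ _); by rewrite mulrC.
Qed.

Lemma nfE t : evalp (nf t) = eval t.
Proof.
elim: t => [n|a IHa b IHb|a IHa b IHb|a IHa|z a IHa|] /=.
- by rewrite /evalp big_cons big_nil addr0.
- by rewrite evalp_mulp IHa IHb.
- by rewrite evalp_cat IHa IHb.
- by rewrite evalp_scale IHa mulrN1z.
- by rewrite evalp_scale IHa.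
- by rewrite /evalp big_nil.
Qed.

Lemma insE q p : evalp (ins q p) = evalm q.2 *~ q.1 + evalp p.
Proof.
elim: p => [|r p IH]; first by rewrite /= evalp_cons.
rewrite [ins _ _]/=; case E: (mcmp q.2 r.2).
- by rewrite !evalp_cons /= (mcmp_eq E) mulrzDr addrA.
- by rewrite !evalp_cons IH addrCA.
- by rewrite !evalp_cons IH addrCA.
Qed.

Lemma collectE p : evalp (collect p) = evalp p.
Proof.
elim: p => [|q p IH] //=; by rewrite insE IH evalp_cons.
Qed.

Lemma iszeroP t : iszero t -> eval t = 0.
Proof.
rewrite /iszero -nfE -collectE /evalp; elim: (collect _) => [|q p IH]; rewrite ?big_nil //=.
by case/andP => /eqP q0 /IH; rewrite big_cons q0 mulr0z add0r.
Qed.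

End Eval.

Definition trip_tm x y z := tA (tA (tM (tM x y) z) (tN (tM (tM x z) y))) (tS 2%:Z (tM x (tM y z))).
Definition malc_tm x y z t :=
  tA (tM (tM x z) (tM y t)) (tN (tA (tA (tA (tM (tM (tM x y) z) t) (tM (tM (tM y z) t) x))
      (tM (tM (tM z t) x) y)) (tM (tM (tM t x) y) z))).
Definition h_tm y z t x u :=
  tA (tA (tA (tM (trip_tm (tM y z) t u) x) (tM (trip_tm (tM y z) t x) u))
     (tM (trip_tm (tM y x) z u) t)) (tM (trip_tm (tM y u) z x) t).
Definition p_tm x y z t :=
  tA (tA (tN (trip_tm (tM z t) x y)) (tN (trip_tm (tM y t) z x))) (trip_tm (tM x t) y z).

Inductive zp := zB of nat | zMal of tm & tm & tm & tm | zH of tm & tm & tm & tm & tm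
  | zML of zp & tm | zMR of tm & zp.

Fixpoint ztm (bs : seq tm) (z : zp) : tm :=
  match z with
  | zB i => nth t0 bs i
  | zMal a b c d => malc_tm a b c d
  | zH a b c d e => h_tm a b c d e
  | zML z t => tM (ztm bs z) t
  | zMR t z => tM t (ztm bs z)
  end.

Definition certtm bs (c : seq (int * zp)) : tm :=
  foldr (fun q acc => tA (tS q.1 (ztm bs q.2)) acc) t0 c.

Definition check (N : nat) (T : tm) bs c : bool := iszero (tA (tS (Posz N) T) (tN (certtm bs c))).

Section Cert.
Variables (F : fieldType) (M : lmodType F) (mul : M -> M -> M).
Hypotheses (mDl : forall x y z, mul (x + y) z = mul x z + mul y z)
           (mDr : forall x y z, mul z (x + y) = mul z x + mul z y)
           (manti : forall x, mul x x = 0)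
           (hm : malcev_identity mul) (hh : forall y z t x u, hfun mul y z t x u = 0).
Variables (e0 e1 e2 : M) (env : seq M).
Hypotheses (h01 : mul e0 e1 = e0) (h21 : mul e2 e1 = - e2) (h02 : mul e0 e2 = e1).

Local Notation ev := (eval mul e0 e1 e2 env).

Lemma trip_tmE x y z : ev (trip_tm x y z) = trip mul (ev x) (ev y) (ev z).
Proof. by rewrite /trip /= scaler_nat pmulrn. Qed.

Lemma p_tmE x y z t : ev (p_tm x y z t) = pfun mul (ev x) (ev y) (ev z) (ev t).
Proof. by rewrite /pfun /trip /= !scaler_nat !pmulrn. Qed.

Fixpoint allz (bs : seq tm) : Prop :=
  match bs with [::] => True | t :: bs' => ev t = 0 /\ allz bs' end.

Lemma allz_nth bs i : allz bs -> ev (nth t0 bs i) = 0.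
Proof.
elim: bs i => [|t bs IH] [|i] /=; try by case. by case=> _ /IH.
Qed.

Lemma ztm0 bs z : allz bs -> ev (ztm bs z) = 0.
Proof.
move=> hb; elim: z => [i|a b c d|a b c d e|z IH t|t z IH] /=.
- exact: allz_nth.
- by rewrite hm subrr.
- by have := hh (ev a) (ev b) (ev c) (ev d) (ev e); rewrite /hfun /trip !scaler_nat !pmulrn.
- by rewrite IH (mm0l mDl).
- by rewrite IH (mm0r mDr).
Qed.

Lemma checkP N T bs c : allz bs -> check N T bs c -> ev T *+ N = 0.
Proof.
move=> hb /(iszeroP mDl mDr manti env h01 h21 h02) /=.
have -> : ev (certtm bs c) = 0.
  elim: c => [|q c IH] //=; by rewrite IH ztm0 // mul0rz addr0.
by rewrite oppr0 addr0 -pmulrn.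
Qed.

End Cert.
Definition cent_N := 2%N.
Definition cent_cert : seq (int * zp) := [::
  ((Negz 1), (zMal (tM (tV 3) (tV 4)) (tV 5) (tV 7) (tV 6)));
  ((Negz 4), (zMal (tM (tV 3) (tV 4)) (tV 6) (tV 7) (tV 5)));
  ((Negz 1), (zMal (tM (tV 5) (tV 6)) (tV 3) (tV 7) (tV 4)));
  ((Posz 2), (zMal (tM (tV 5) (tV 7)) (tV 3) (tV 6) (tV 4)));
  ((Negz 0), (zMal (tM (tV 3) (tV 6)) (tV 4) (tV 5) (tV 7)));
  ((Posz 2), (zMal (tM (tV 4) (tV 7)) (tV 5) (tV 3) (tV 6)));
  ((Negz 0), (zMal (tM (tV 4) (tV 5)) (tV 3) (tV 6) (tV 7)));
  ((Negz 3), (zH (tV 3) (tV 4) (tV 7) (tV 5) (tV 6)));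
  ((Negz 1), (zMal (tM (tV 3) (tV 4)) (tV 6) (tV 5) (tV 7)));
  ((Negz 0), (zMal (tM (tV 4) (tV 6)) (tV 7) (tV 3) (tV 5)));
  ((Negz 0), (zMal (tM (tV 3) (tV 5)) (tV 7) (tV 4) (tV 6)));
  ((Negz 1), (zMal (tM (tV 3) (tV 5)) (tV 4) (tV 7) (tV 6)));
  ((Negz 0), (zMal (tM (tV 6) (tV 7)) (tV 3) (tV 4) (tV 5)));
  ((Negz 0), (zMal (tM (tV 3) (tV 5)) (tV 6) (tV 7) (tV 4)));
  ((Negz 2), (zMal (tM (tV 3) (tV 5)) (tV 4) (tV 6) (tV 7)));
  ((Posz 1), (zMal (tM (tV 4) (tV 7)) (tV 6) (tV 3) (tV 5)));
  ((Posz 2), (zMal (tM (tV 5) (tV 7)) (tV 4) (tV 3) (tV 6)));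
  ((Negz 1), (zH (tV 3) (tV 4) (tV 6) (tV 5) (tV 7)));
  ((Negz 0), (zMal (tM (tV 4) (tV 7)) (tV 3) (tV 5) (tV 6)));
  ((Posz 1), (zMal (tM (tV 4) (tV 5)) (tV 6) (tV 7) (tV 3)));
  ((Negz 1), (zH (tV 3) (tV 5) (tV 6) (tV 4) (tV 7)));
  ((Posz 2), (zH (tV 4) (tV 5) (tV 6) (tV 3) (tV 7)));
  ((Negz 0), (zMal (tM (tV 4) (tV 5)) (tV 7) (tV 3) (tV 6)));
  ((Posz 2), (zMal (tM (tV 4) (tV 5)) (tV 6) (tV 3) (tV 7)));
  ((Negz 0), (zMal (tM (tV 3) (tV 6)) (tV 7) (tV 4) (tV 5)));
  ((Posz 1), (zMal (tM (tV 3) (tV 7)) (tV 6) (tV 4) (tV 5)));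
  ((Negz 1), (zML (zMal (tV 3) (tV 4) (tV 7) (tV 6)) (tV 5)));
  ((Posz 2), (zML (zMal (tV 3) (tV 4) (tV 6) (tV 7)) (tV 5)));
  ((Posz 3), (zMal (tM (tV 6) (tV 7)) (tV 4) (tV 5) (tV 3)));
  ((Negz 1), (zMal (tM (tV 3) (tV 6)) (tV 4) (tV 7) (tV 5)));
  ((Posz 1), (zMal (tM (tV 5) (tV 7)) (tV 4) (tV 6) (tV 3)));
  ((Posz 1), (zMal (tM (tV 4) (tV 7)) (tV 5) (tV 6) (tV 3)));
  ((Negz 0), (zMal (tM (tV 5) (tV 6)) (tV 3) (tV 4) (tV 7)));
  ((Negz 0), (zMal (tM (tV 3) (tV 7)) (tV 5) (tV 6) (tV 4)));
  ((Posz 1), (zMal (tM (tV 5) (tV 6)) (tV 4) (tV 7) (tV 3)));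
  ((Posz 1), (zMal (tM (tV 4) (tV 6)) (tV 5) (tV 7) (tV 3)));
  ((Posz 1), (zMal (tM (tV 5) (tV 7)) (tV 3) (tV 4) (tV 6)));
  ((Posz 1), (zMal (tM (tV 3) (tV 6)) (tV 5) (tV 7) (tV 4)));
  ((Posz 2), (zH (tV 3) (tV 6) (tV 4) (tV 5) (tV 7)));
  ((Negz 1), (zH (tV 3) (tV 4) (tV 5) (tV 6) (tV 7)));
  ((Negz 4), (zMal (tM (tV 3) (tV 4)) (tV 5) (tV 6) (tV 7)));
  ((Negz 4), (zMal (tM (tV 3) (tV 4)) (tV 7) (tV 5) (tV 6)));
  ((Negz 1), (zH (tV 4) (tV 6) (tV 3) (tV 5) (tV 7)));
  ((Negz 1), (zMal (tM (tV 4) (tV 6)) (tV 3) (tV 7) (tV 5)));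
  ((Negz 1), (zML (zMal (tV 3) (tV 6) (tV 5) (tV 7)) (tV 4)));
  ((Negz 0), (zMal (tM (tV 6) (tV 7)) (tV 5) (tV 3) (tV 4)));
  ((Negz 0), (zMal (tM (tV 5) (tV 6)) (tV 7) (tV 3) (tV 4)));
  ((Posz 1), (zMal (tM (tV 5) (tV 7)) (tV 6) (tV 3) (tV 4)));
  ((Negz 1), (zH (tV 5) (tV 6) (tV 3) (tV 4) (tV 7)));
  ((Negz 0), (zMal (tM (tV 3) (tV 7)) (tV 4) (tV 5) (tV 6)));
  ((Negz 0), (zMal (tM (tV 4) (tV 6)) (tV 3) (tV 5) (tV 7)));
  ((Negz 1), (zML (zMal (tV 4) (tV 5) (tV 6) (tV 7)) (tV 3)));
  ((Negz 1), (zML (zMal (tV 4) (tV 6) (tV 7) (tV 5)) (tV 3)));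
  ((Negz 1), (zML (zMal (tV 4) (tV 7) (tV 5) (tV 6)) (tV 3)));
  ((Negz 1), (zML (zMal (tV 4) (tV 6) (tV 5) (tV 7)) (tV 3)))].
Definition jG_N := 6%N.
Definition jG_cert : seq (int * zp) := [::
  ((Posz 1), (zMal (tV 3) (tV 0) (tV 2) (tV 2)));
  ((Posz 1), (zB 5));
  ((Posz 1), (zML (zB 2) (tV 2)));
  ((Negz 2), (zML (zB 9) (tV 2)))].
Definition jEG_N := 3%N.
Definition jEG_cert : seq (int * zp) := [::
  ((Negz 5), (zB 9));
  ((Posz 1), (zB 2));
  ((Posz 1), (zMal (tV 3) (tV 0) (tV 2) (tV 1)));
  ((Negz 2), (zML (zB 9) (tV 1)));
  ((Posz 1), (zML (zB 2) (tV 1)));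
  ((Posz 1), (zMal (tV 3) (tV 0) (tV 1) (tV 2)));
  ((Posz 1), (zML (zB 1) (tV 2)))].
Definition id1_bases : seq tm := [::
  (trip_tm (tV 3) (tV 0) (tV 2));
  (trip_tm (tV 3) (tV 0) (tV 1));
  (trip_tm (tV 3) (tV 2) (tV 1));
  (tA (tM (tV 3) (tV 1)) (tN (tV 3)));
  (trip_tm (tV 4) (tV 0) (tV 2));
  (trip_tm (tV 4) (tV 0) (tV 1));
  (trip_tm (tV 4) (tV 2) (tV 1));
  (tA (tM (tV 4) (tV 1)) (tN (tV 4)));
  (trip_tm (tV 5) (tV 0) (tV 2));
  (trip_tm (tV 5) (tV 0) (tV 1));
  (trip_tm (tV 5) (tV 2) (tV 1));
  (tA (tM (tV 5) (tV 1)) (tN (tV 5)));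
  (tA (tM (tM (tV 3) (tV 0)) (tV 4)) (tN (tM (tV 3) (tM (tV 4) (tV 0)))));
  (tA (tM (tM (tV 3) (tV 4)) (tV 1)) (tM (tV 3) (tV 4)));
  (tA (tM (tM (tV 3) (tV 4)) (tV 0)) (tM (tV 3) (tM (tV 4) (tV 0))));
  (tM (tM (tV 3) (tM (tV 4) (tV 0))) (tV 1));
  (tM (tM (tV 3) (tV 4)) (tV 5));
  (tA (tM (tM (tV 3) (tV 0)) (tV 5)) (tN (tM (tV 3) (tM (tV 5) (tV 0)))));
  (tA (tM (tM (tV 3) (tV 5)) (tV 1)) (tM (tV 3) (tV 5)));
  (tA (tM (tM (tV 3) (tV 5)) (tV 0)) (tM (tV 3) (tM (tV 5) (tV 0))));
  (tM (tM (tV 3) (tM (tV 5) (tV 0))) (tV 1));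
  (tM (tM (tV 3) (tV 5)) (tV 4));
  (tA (tM (tM (tV 4) (tV 0)) (tV 3)) (tN (tM (tV 4) (tM (tV 3) (tV 0)))));
  (tA (tM (tM (tV 4) (tV 3)) (tV 1)) (tM (tV 4) (tV 3)));
  (tA (tM (tM (tV 4) (tV 3)) (tV 0)) (tM (tV 4) (tM (tV 3) (tV 0))));
  (tM (tM (tV 4) (tM (tV 3) (tV 0))) (tV 1));
  (tM (tM (tV 4) (tV 3)) (tV 5));
  (tA (tM (tM (tV 4) (tV 0)) (tV 5)) (tN (tM (tV 4) (tM (tV 5) (tV 0)))));
  (tA (tM (tM (tV 4) (tV 5)) (tV 1)) (tM (tV 4) (tV 5)));
  (tA (tM (tM (tV 4) (tV 5)) (tV 0)) (tM (tV 4) (tM (tV 5) (tV 0))));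
  (tM (tM (tV 4) (tM (tV 5) (tV 0))) (tV 1));
  (tM (tM (tV 4) (tV 5)) (tV 3));
  (tA (tM (tM (tV 5) (tV 0)) (tV 3)) (tN (tM (tV 5) (tM (tV 3) (tV 0)))));
  (tA (tM (tM (tV 5) (tV 3)) (tV 1)) (tM (tV 5) (tV 3)));
  (tA (tM (tM (tV 5) (tV 3)) (tV 0)) (tM (tV 5) (tM (tV 3) (tV 0))));
  (tM (tM (tV 5) (tM (tV 3) (tV 0))) (tV 1));
  (tM (tM (tV 5) (tV 3)) (tV 4));
  (tA (tM (tM (tV 5) (tV 0)) (tV 4)) (tN (tM (tV 5) (tM (tV 4) (tV 0)))));
  (tA (tM (tM (tV 5) (tV 4)) (tV 1)) (tM (tV 5) (tV 4)));
  (tA (tM (tM (tV 5) (tV 4)) (tV 0)) (tM (tV 5) (tM (tV 4) (tV 0))));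
  (tM (tM (tV 5) (tM (tV 4) (tV 0))) (tV 1));
  (tM (tM (tV 5) (tV 4)) (tV 3))].
Definition id1_N := 48%N.
Definition id1_cert : seq (int * zp) := [::
  ((Negz 26), (zML (zB 7) (tM (tV 5) (tM (tV 0) (tV 3)))));
  ((Posz 546), (zMal (tV 1) (tV 3) (tM (tV 4) (tV 5)) (tV 0)));
  ((Posz 546), (zMal (tV 5) (tV 1) (tM (tV 0) (tV 3)) (tV 4)));
  ((Negz 445), (zH (tV 3) (tV 4) (tV 1) (tV 0) (tV 5)));
  ((Posz 133), (zML (zML (zML (zB 7) (tV 3)) (tV 0)) (tV 5)));
  ((Posz 333), (zMal (tV 1) (tM (tV 3) (tV 5)) (tV 0) (tV 4)));
  ((Negz 314), (zMal (tM (tV 0) (tV 4)) (tV 5) (tV 1) (tV 3)));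
  ((Posz 34), (zML (zB 13) (tM (tV 0) (tV 5))));
  ((Posz 47), (zMal (tV 1) (tM (tV 0) (tV 5)) (tV 4) (tV 3)));
  ((Posz 160), (zMal (tV 4) (tV 3) (tV 0) (tV 5)));
  ((Posz 889), (zMal (tV 3) (tV 0) (tM (tV 4) (tV 5)) (tV 1)));
  ((Posz 659), (zMal (tV 5) (tM (tV 1) (tV 3)) (tV 4) (tV 0)));
  ((Negz 674), (zMal (tV 1) (tV 5) (tV 3) (tM (tV 0) (tV 4))));
  ((Negz 560), (zML (zML (zB 3) (tV 4)) (tM (tV 0) (tV 5))));
  ((Posz 295), (zMal (tV 4) (tV 0) (tM (tV 1) (tV 3)) (tV 5)));
  ((Negz 6), (zMal (tV 0) (tV 1) (tM (tV 4) (tV 5)) (tV 3)));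
  ((Negz 85), (zH (tV 3) (tV 0) (tV 5) (tV 4) (tV 1)));
  ((Posz 121), (zH (tV 4) (tV 0) (tV 3) (tV 1) (tV 5)));
  ((Negz 499), (zML (zMal (tV 1) (tV 3) (tV 0) (tV 4)) (tV 5)));
  ((Negz 105), (zML (zMal (tV 5) (tV 1) (tV 0) (tV 3)) (tV 4)));
  ((Negz 465), (zH (tV 5) (tV 3) (tV 4) (tV 0) (tV 1)));
  ((Posz 86), (zH (tV 3) (tV 5) (tV 4) (tV 0) (tV 1)));
  ((Posz 177), (zML (zMal (tV 3) (tV 0) (tV 5) (tV 1)) (tV 4)));
  ((Posz 393), (zML (zML (zB 11) (tM (tV 0) (tV 3))) (tV 4)));
  ((Posz 285), (zH (tV 1) (tV 0) (tV 4) (tV 3) (tV 5)));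
  ((Posz 456), (zML (zB 20) (tV 4)));
  ((Negz 363), (zH (tV 5) (tV 0) (tV 4) (tV 1) (tV 3)));
  ((Negz 372), (zMal (tM (tV 0) (tV 5)) (tV 3) (tV 4) (tV 1)));
  ((Negz 725), (zML (zML (zB 34) (tV 1)) (tV 4)));
  ((Negz 87), (zMal (tM (tV 3) (tV 5)) (tV 0) (tV 1) (tV 4)));
  ((Negz 307), (zMal (tV 3) (tV 1) (tM (tV 0) (tV 4)) (tV 5)));
  ((Posz 6), (zMal (tV 0) (tV 4) (tV 3) (tM (tV 1) (tV 5))));
  ((Posz 437), (zMal (tV 1) (tM (tV 3) (tV 4)) (tV 5) (tV 0)));
  ((Negz 436), (zMal (tM (tV 0) (tV 5)) (tV 3) (tV 1) (tV 4)));
  ((Negz 436), (zMal (tV 4) (tV 0) (tM (tV 1) (tV 5)) (tV 3)));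
  ((Posz 45), (zMal (tV 5) (tV 0) (tV 3) (tV 4)));
  ((Negz 68), (zH (tV 1) (tV 0) (tV 5) (tV 3) (tV 4)));
  ((Posz 489), (zH (tV 1) (tV 3) (tV 5) (tV 4) (tV 0)));
  ((Negz 268), (zMal (tV 1) (tV 0) (tM (tV 3) (tV 5)) (tV 4)));
  ((Negz 268), (zMal (tM (tV 1) (tV 4)) (tV 5) (tV 0) (tV 3)));
  ((Posz 134), (zH (tV 0) (tV 4) (tV 5) (tV 1) (tV 3)));
  ((Negz 442), (zMal (tV 4) (tM (tV 0) (tV 3)) (tV 5) (tV 1)));
  ((Posz 454), (zMal (tV 0) (tM (tV 3) (tV 4)) (tV 5) (tV 1)));
  ((Posz 454), (zMal (tV 5) (tV 0) (tM (tV 3) (tV 4)) (tV 1)));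
  ((Posz 87), (zML (zMal (tV 1) (tV 0) (tV 4) (tV 5)) (tV 3)));
  ((Posz 497), (zH (tV 5) (tV 0) (tV 3) (tV 4) (tV 1)));
  ((Posz 114), (zH (tV 0) (tV 1) (tV 3) (tV 5) (tV 4)));
  ((Negz 937), (zML (zB 37) (tV 3)));
  ((Negz 41), (zML (zML (zB 11) (tM (tV 0) (tV 4))) (tV 3)));
  ((Posz 302), (zMal (tV 4) (tV 5) (tV 0) (tM (tV 1) (tV 3))));
  ((Negz 301), (zMal (tV 1) (tV 3) (tV 5) (tM (tV 0) (tV 4))));
  ((Negz 415), (zML (zMal (tV 0) (tV 4) (tV 1) (tV 5)) (tV 3)));
  ((Negz 825), (zML (zMal (tV 0) (tV 5) (tV 4) (tV 1)) (tV 3)));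
  ((Negz 81), (zH (tV 4) (tV 1) (tV 3) (tV 0) (tV 5)));
  ((Negz 509), (zML (zB 12) (tV 5)));
  ((Posz 186), (zML (zML (zML (zB 11) (tV 4)) (tV 0)) (tV 3)));
  ((Negz 182), (zML (zML (zB 38) (tV 0)) (tV 3)));
  ((Negz 1175), (zML (zML (zML (zB 7) (tV 0)) (tV 5)) (tV 3)));
  ((Posz 563), (zML (zMal (tV 5) (tV 3) (tV 0) (tV 4)) (tV 1)));
  ((Negz 48), (zML (zMal (tV 4) (tV 0) (tV 1) (tV 5)) (tV 3)));
  ((Negz 16), (zML (zMal (tV 5) (tV 0) (tV 4) (tV 3)) (tV 1)));
  ((Posz 18), (zH (tV 3) (tV 4) (tV 5) (tV 1) (tV 0)));
  ((Posz 171), (zMal (tM (tV 1) (tV 3)) (tV 0) (tV 4) (tV 5)));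
  ((Negz 126), (zMal (tV 1) (tM (tV 0) (tV 4)) (tV 3) (tV 5)));
  ((Negz 546), (zMal (tV 4) (tV 5) (tV 3) (tV 0)));
  ((Negz 658), (zML (zML (zB 19) (tV 1)) (tV 4)));
  ((Negz 429), (zML (zMal (tV 3) (tV 0) (tV 1) (tV 4)) (tV 5)));
  ((Posz 498), (zMal (tV 5) (tV 0) (tV 4) (tV 3)));
  ((Negz 852), (zML (zB 29) (tV 3)));
  ((Posz 519), (zML (zMal (tV 1) (tV 3) (tV 5) (tV 0)) (tV 4)));
  ((Negz 202), (zMal (tV 1) (tV 4) (tV 3) (tM (tV 0) (tV 5))));
  ((Negz 202), (zMal (tV 3) (tV 5) (tM (tV 1) (tV 4)) (tV 0)));
  ((Posz 896), (zML (zMal (tV 4) (tV 1) (tV 3) (tV 5)) (tV 0)));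
  ((Posz 480), (zML (zMal (tV 1) (tV 5) (tV 4) (tV 3)) (tV 0)));
  ((Posz 43), (zML (zMal (tV 4) (tV 3) (tV 5) (tV 1)) (tV 0)));
  ((Posz 584), (zML (zMal (tV 3) (tV 1) (tV 4) (tV 5)) (tV 0)));
  ((Posz 437), (zH (tV 1) (tV 4) (tV 0) (tV 5) (tV 3)));
  ((Negz 359), (zML (zML (zB 23) (tV 0)) (tV 5)));
  ((Negz 359), (zMal (tV 0) (tV 3) (tV 4) (tM (tV 1) (tV 5))));
  ((Posz 360), (zML (zB 11) (tM (tV 4) (tM (tV 0) (tV 3)))));
  ((Negz 359), (zH (tV 0) (tV 4) (tV 1) (tV 5) (tV 3)));
  ((Posz 660), (zML (zML (zB 27) (tV 1)) (tV 3)));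
  ((Posz 75), (zMal (tM (tV 3) (tV 5)) (tV 1) (tV 0) (tV 4)));
  ((Posz 18), (zMal (tV 1) (tM (tV 3) (tV 5)) (tV 4) (tV 0)));
  ((Negz 59), (zML (zB 27) (tM (tV 1) (tV 3))));
  ((Negz 229), (zMal (tV 0) (tV 4) (tM (tV 1) (tV 3)) (tV 5)));
  ((Negz 315), (zML (zB 17) (tM (tV 1) (tV 4))));
  ((Posz 384), (zML (zML (zB 24) (tV 1)) (tV 5)));
  ((Posz 128), (zML (zML (zB 19) (tV 4)) (tV 1)));
  ((Posz 57), (zML (zB 7) (tM (tV 0) (tM (tV 3) (tV 5)))));
  ((Posz 7), (zML (zML (zB 33) (tV 4)) (tV 0)));
  ((Posz 1), (zML (zML (zB 13) (tV 5)) (tV 0)));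
  ((Posz 666), (zH (tV 1) (tV 4) (tV 5) (tV 0) (tV 3)));
  ((Negz 445), (zML (zML (zB 41) (tV 0)) (tV 1)));
  ((Posz 436), (zMal (tV 1) (tM (tV 4) (tV 5)) (tV 0) (tV 3)));
  ((Posz 436), (zH (tV 4) (tV 0) (tV 1) (tV 3) (tV 5)));
  ((Negz 325), (zML (zML (zB 7) (tM (tV 3) (tV 5))) (tV 0)));
  ((Posz 254), (zML (zB 41) (tV 0)));
  ((Negz 27), (zML (zML (zML (zB 3) (tV 4)) (tV 0)) (tV 5)));
  ((Negz 52), (zML (zML (zB 16) (tV 1)) (tV 0)));
  ((Negz 425), (zML (zML (zB 22) (tV 5)) (tV 1)));
  ((Posz 104), (zML (zML (zB 31) (tV 1)) (tV 0)))].

Definition cent_T := let x := tV 3 in let s := tV 4 in let y := tV 5 in let z := tV 6 in let t := tV 7 in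
  tA (p_tm (tM x s) y z t) (tN (tM x (p_tm s y z t))).
Lemma cent_ok : check cent_N cent_T [::] cent_cert.
Proof. by vm_compute. Qed.

Definition j_bases : seq tm :=
  [:: trip_tm (tV 3) (tV 0) (tV 0); trip_tm (tV 3) (tV 0) (tV 1); trip_tm (tV 3) (tV 0) (tV 2);
      trip_tm (tV 3) (tV 1) (tV 0); trip_tm (tV 3) (tV 1) (tV 1); trip_tm (tV 3) (tV 1) (tV 2);
      trip_tm (tV 3) (tV 2) (tV 0); trip_tm (tV 3) (tV 2) (tV 1); trip_tm (tV 3) (tV 2) (tV 2);
      tA (tM (tV 3) (tV 1)) (tN (tV 3))].
Definition jG_T := tM (tV 3) (tV 2).
Definition jEG_T := tA (tM (tM (tV 3) (tV 0)) (tV 2)) (tS 2%:Z (tV 3)).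
Lemma jG_ok : check jG_N jG_T j_bases jG_cert.
Proof. by vm_compute. Qed.
Lemma jEG_ok : check jEG_N jEG_T j_bases jEG_cert.
Proof. by vm_compute. Qed.

Definition id1_T := tA (tA (tM (tM (tV 5) (tV 0)) (tM (tV 3) (tV 4)))
   (tM (tM (tV 3) (tV 0)) (tM (tV 4) (tV 5)))) (tM (tM (tV 4) (tV 0)) (tM (tV 5) (tV 3))).
Lemma id1_ok : check id1_N id1_T id1_bases id1_cert.
Proof. by vm_compute. Qed.

Section Main.
Variables (F : fieldType) (M : lmodType F) (mul : M -> M -> M) (E H Fe G : M).
Hypothesis hS : setting mul E H Fe.
Hypothesis hG : G = 2%:R *: Fe.

Lemma two0 : (2%:R : F) != 0. Proof. by case: hS. Qed.
Lemma three0 : (3%:R : F) != 0. Proof. by case: hS. Qed.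
Lemma hH : malcevH mul. Proof. by case: hS. Qed.
Lemma bil : mul_bilinear mul. Proof. by case: hH. Qed.
Lemma manti : anticommutative mul. Proof. by case: hH. Qed.
Lemma malc : malcev_identity mul. Proof. by case: hH. Qed.
Lemma hh : forall y z t x u, hfun mul y z t x u = 0. Proof. by case: hH. Qed.
Lemma sl2 : sl2_subalgebra mul E H Fe. Proof. by case: hS. Qed.
Lemma faith : L_faithful mul E H Fe. Proof. by case: hS. Qed.

Lemma mDl x y z : mul (x + y) z = mul x z + mul y z.
Proof. by have := (bil.1 1 x y z); rewrite !scale1r. Qed.
Lemma mDr x y z : mul z (x + y) = mul z x + mul z y.
Proof. by have := (bil.2 1 x y z); rewrite !scale1r. Qed.
Lemma m0l z : mul 0 z = 0. Proof. exact: (mm0l mDl). Qed.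
Lemma m0r z : mul z 0 = 0. Proof. exact: (mm0r mDr). Qed.
Lemma mZl a x z : mul (a *: x) z = a *: mul x z.
Proof. by have := (bil.1 a x 0 z); rewrite !addr0 m0l addr0. Qed.
Lemma mZr a x z : mul z (a *: x) = a *: mul z x.
Proof. by have := (bil.2 a x 0 z); rewrite !addr0 m0r addr0. Qed.
Lemma mNl x z : mul (- x) z = - mul x z. Proof. exact: (mmNl mDl). Qed.
Lemma mNr x z : mul z (- x) = - mul z x. Proof. exact: (mmNr mDr). Qed.
Lemma mskew x y : mul x y = - mul y x. Proof. exact: (manti2 mDl mDr manti). Qed.

Lemma hEH : mul E H = E. Proof. by case: sl2. Qed.
Lemma hFH : mul Fe H = - Fe. Proof. by case: sl2. Qed.
Lemma hEF : mul E Fe = (2%:R)^-1 *: H. Proof. by case: sl2. Qed.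
Lemma hGH : mul G H = - G. Proof. by rewrite hG mZl hFH scalerN. Qed.
Lemma hEG : mul E G = H. Proof. by rewrite hG mZr hEF scalerA mulfV ?two0 // scale1r. Qed.

Lemma cancelN (n : nat) (v : M) : (n%:R : F) != 0 -> v *+ n = 0 -> v = 0.
Proof. by move=> hn; rewrite -scaler_nat => /eqP; rewrite scaler_eq0 (negbTE hn) => /eqP. Qed.
Lemma nz23 a b : ((2 ^ a * 3 ^ b)%N%:R : F) != 0.
Proof. by rewrite natrM !natrX mulf_neq0 // expf_neq0 ?two0 ?three0. Qed.

Local Notation ev env := (eval mul E H G env).
Lemma chk env N T bs c : allz mul E H G env bs -> check N T bs c -> ev env T *+ N = 0.
Proof. exact: (checkP mDl mDr manti malc hh hEH hGH hEG). Qed.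

Lemma alpha_cent y z t x s : alpha mul y z t (mul x s) = mul x (alpha mul y z t s).
Proof.
have := @chk [:: x; s; y; z; t] _ _ [::] _ I cent_ok.
have -> : ev [:: x; s; y; z; t] cent_T = alpha mul y z t (mul x s) - mul x (alpha mul y z t s).
  by rewrite /alpha /pfun /trip /= !scaler_nat !pmulrn.
by move/(cancelN two0)/eqP; rewrite subr_eq0 => /eqP.
Qed.

Lemma alpha_add y z t x x' : alpha mul y z t (x + x') = alpha mul y z t x + alpha mul y z t x'.
Proof.
pose T := tA (p_tm (tA (tV 3) (tV 4)) (tV 5) (tV 6) (tV 7))
   (tN (tA (p_tm (tV 3) (tV 5) (tV 6) (tV 7)) (p_tm (tV 4) (tV 5) (tV 6) (tV 7)))).
have ok : check 1 T [::] [::] by vm_compute.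
have := @chk [:: x; x'; y; z; t] _ _ [::] _ I ok.
have -> : ev [:: x; x'; y; z; t] T = alpha mul y z t (x + x') - (alpha mul y z t x + alpha mul y z t x').
  by rewrite /alpha /pfun /trip /= !scaler_nat !pmulrn.
by rewrite mulr1n => /eqP; rewrite subr_eq0 => /eqP.
Qed.

Definition CA (f : M -> M) := (forall x y, f (x + y) = f x + f y) /\ (forall x s, f (mul x s) = mul x (f s)).

Lemma CA0 f : CA f -> f 0 = 0.
Proof. by case=> ha _; apply: (addrI (f 0)); rewrite -ha !addr0. Qed.
Lemma CAN f x : CA f -> f (- x) = - f x.
Proof. by move=> hf; apply: (addrI (f x)); rewrite -hf.1 !subrr CA0. Qed.
Lemma CAr f x s : CA f -> f (mul x s) = mul (f x) s.
Proof. by move=> hf; rewrite mskew CAN // hf.2 -mskew. Qed.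
Lemma CAn2 f x : CA f -> f (x *+ 2) = f x *+ 2.
Proof. by move=> hf; rewrite !mulr2n hf.1. Qed.
Lemma CAhalf f x : CA f -> f ((2%:R)^-1 *: x) = (2%:R)^-1 *: f x.
Proof.
move=> hf; have h2 : forall v : M, ((2%:R)^-1 *: v) *+ 2 = v.
  by move=> v; rewrite -scaler_nat scalerA mulfV ?two0 // scale1r.
by rewrite -{2}(h2 x) CAn2 // -scaler_nat scalerA mulVf ?two0 // scale1r.
Qed.
Lemma CA_comp f g : CA f -> CA g -> CA (fun x => f (g x)).
Proof. move=> hf hg; split=> *; by rewrite ?hg.1 ?hf.1 ?hg.2 ?hf.2. Qed.
Lemma CA_add f g : CA f -> CA g -> CA (fun x => f x + g x).
Proof.
move=> hf hg; split=> *; first by rewrite hf.1 hg.1 addrACA.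
by rewrite hf.2 hg.2 mDr.
Qed.

Lemma U_CA f : inU mul E H Fe f -> CA f.
Proof.
case=> s [_ hs]; split=> [x y|x y]; rewrite !hs.
  rewrite -big_split; apply: eq_bigr => q _; by rewrite alpha_add scalerDr.
rewrite (big_morph (mul x) (fun a b => mDr a b x) (m0r x)).
apply: eq_bigr => q _; by rewrite alpha_cent mZr.
Qed.

Lemma uniq0 f : CA f -> f Fe = 0 -> forall m, f m = 0.
Proof.
move=> hf hF.
have eH : H = mul E Fe *+ 2 by rewrite hEF -scaler_nat scalerA mulfV ?two0 // scale1r.
have fH : f H = 0 by rewrite eH CAn2 // hf.2 hF m0r mul0rn.
have fE : f E = 0 by rewrite -hEH hf.2 fH m0r.
move=> m; apply/eqP; apply/negPn/negP => /eqP nz.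
have [a [[c1 [c2 [c3 ->]]] ]] := faith nz.
by rewrite !mDr !mZr -!(@CAr f _ _ hf) !hf.2 hF fH fE !m0r !scaler0 !addr0.
Qed.

Lemma inLE : inL E H Fe E. Proof. by exists 1, 0, 0; rewrite scale1r !scale0r !addr0. Qed.
Lemma inLH : inL E H Fe H. Proof. by exists 0, 1, 0; rewrite scale1r !scale0r add0r addr0. Qed.
Lemma inLG : inL E H Fe G. Proof. by exists 0, 0, 2%:R; rewrite hG !scale0r !add0r. Qed.

Lemma trip_shape x a b : inV mul E H Fe x -> inL E H Fe a -> inL E H Fe b ->
  mul (mul x a) b + - mul (mul x b) a + mul x (mul a b) *~ 2 = 0.
Proof. by case=> hJ _ ha hb; have := hJ a b ha hb; rewrite /trip scaler_nat pmulrn. Qed.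
Lemma xH_shape x : inV mul E H Fe x -> mul x H + - x = 0.
Proof. by case=> _ ->; rewrite subrr. Qed.

Ltac inLs := first [exact inLE | exact inLH | exact inLG].

Lemma j_allz x : inV mul E H Fe x -> allz mul E H G [:: x] j_bases.
Proof.
move=> hx; rewrite /=; do !split; first [apply: trip_shape => //; inLs | exact: xH_shape].
Qed.

Lemma xG0 x : inV mul E H Fe x -> mul x G = 0.
Proof.
move=> hx; have := chk (j_allz hx) jG_ok.
by move/(cancelN (nz23 1 1)).
Qed.

Lemma xEG x : inV mul E H Fe x -> mul (mul x E) Fe = - x.
Proof.
move=> hx; have := chk (j_allz hx) jEG_ok; move/(cancelN (nz23 0 1)) => /= h.
apply/eqP; rewrite -addr_eq0; apply/eqP; apply: (cancelN two0).
by rewrite mulrnDl -scaler_nat -mZr -hG pmulrn.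
Qed.

Lemma xF0 x : inV mul E H Fe x -> mul x Fe = 0.
Proof.
move=> hx; apply: (cancelN two0); rewrite -scaler_nat -mZr -hG; exact: xG0.
Qed.


Variable br : M -> M -> M -> M.
Hypothesis hbr : bracket_ok mul E H Fe br.

Section Pair.
Variables x y : M.
Hypotheses (hx : inV mul E H Fe x) (hy : inV mul E H Fe y).
Let hb : CA (br x y). Proof. by case: hbr => bU _ _ _ _; apply: U_CA; apply: bU. Qed.
Let B : [/\ mul x y = br x y Fe, mul x (mul y E) = (2%:R)^-1 *: br x y H,
             mul (mul x E) y = (2%:R)^-1 *: br x y H & mul (mul x E) (mul y E) = br x y E].
Proof. by case: hbr => _ _ _ _ /(_ x y hx hy). Qed.

Lemma P0 : mul (mul x E) y + - mul x (mul y E) = 0.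
Proof. by case: B => _ -> -> _; rewrite subrr. Qed.
Lemma P1 : mul (mul x y) H + mul x y = 0.
Proof. by case: B => -> _ _ _; rewrite -(CAr _ _ hb) hFH (CAN _ hb) addNr. Qed.
Lemma P2 : mul (mul x y) E + mul x (mul y E) = 0.
Proof.
by case: B => -> -> _ _; rewrite -(CAr _ _ hb) [mul Fe E]mskew hEF (CAN (2%:R^-1 *: H) hb) (CAhalf H hb) addNr.
Qed.
Lemma P5 : mul (mul x (mul y E)) H = 0.
Proof. by case: B => _ -> _ _; rewrite mZl -(CAr _ _ hb) manti (CA0 hb) scaler0. Qed.
Lemma Pxyz z : inV mul E H Fe z -> mul (mul x y) z = 0.
Proof. by move=> hz; case: B => -> _ _ _; rewrite -(CAr _ _ hb) mskew xF0 // oppr0 (CA0 hb). Qed.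

Lemma brJ w : inV mul E H Fe w -> br x y w = - mul (mul w E) (mul x y).
Proof.
move=> hw; have e : br x y w = br x y (- mul (mul w E) Fe) by rewrite xEG // opprK.
by rewrite e (CAN _ hb) hb.2; case: B => -> _ _ _.
Qed.
End Pair.

Lemma id1_allz u v w : inV mul E H Fe u -> inV mul E H Fe v -> inV mul E H Fe w ->
  allz mul E H G [:: u; v; w] id1_bases.
Proof.
move=> hu hv hw; rewrite /=; do !split;
 first [ (apply: trip_shape; [assumption|inLs|inLs]) | (apply: xH_shape; assumption)
       | (apply: P0; assumption) | (apply: P1; assumption) | (apply: P2; assumption)
       | (apply: P5; assumption) | (apply: Pxyz; assumption) ].
Qed.

Lemma core u v w : inV mul E H Fe u -> inV mul E H Fe v -> inV mul E H Fe w ->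
  mul (mul w E) (mul u v) + mul (mul u E) (mul v w) + mul (mul v E) (mul w u) = 0.
Proof.
move=> hu hv hw; have := chk (id1_allz hu hv hw) id1_ok.
by move/(cancelN (nz23 4 1)).
Qed.

Lemma ident1 u v w : inV mul E H Fe u -> inV mul E H Fe v -> inV mul E H Fe w ->
  br u v w + br v w u + br w u v = 0.
Proof.
move=> hu hv hw; rewrite (brJ hu hv hw) (brJ hv hw hu) (brJ hw hu hv) -!opprD core //.
by rewrite oppr0.
Qed.

Lemma ident2 u v w t : inV mul E H Fe u -> inV mul E H Fe v -> inV mul E H Fe w ->
  inV mul E H Fe t ->
  forall x, br u v (br w t x) + br v w (br u t x) + br w u (br v t x) = 0.
Proof.
move=> hu hv hw ht.
have hU : forall a b, inV mul E H Fe a -> inV mul E H Fe b -> CA (br a b).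
  by move=> a b ha hb; case: hbr => bU _ _ _ _; apply: U_CA; apply: bU.
have B1 : forall a b, inV mul E H Fe a -> inV mul E H Fe b -> br a b Fe = mul a b.
  by move=> a b ha hb; case: hbr => _ _ _ _ /(_ a b ha hb) [].
apply: uniq0.
  apply: CA_add; first apply: CA_add; apply: CA_comp; exact: hU.
rewrite !B1 // (CAr _ _ (hU _ _ hu hv)) (CAr _ _ (hU _ _ hv hw)) (CAr _ _ (hU _ _ hw hu)) -!mDl ident1 // m0l.
by [].
Qed.

End Main.

Unset Implicit Arguments.
Set Strict Implicit.

Theorem mainTheorem7 (F : fieldType) (M : lmodType F) (mul : M -> M -> M)
  (E H Fe : M) (br : M -> M -> M -> M)
  (hS : setting mul E H Fe) (hbr : bracket_ok mul E H Fe br) :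
  forall u v w t : M,
    inV mul E H Fe u -> inV mul E H Fe v -> inV mul E H Fe w -> inV mul E H Fe t ->
    br u v w + br v w u + br w u v = 0 /\
    (forall x : M,
       br u v (br w t x) + br v w (br u t x) + br w u (br v t x) = 0).
Proof.
move=> u v w t hu hv hw ht; split.
  exact: (ident1 (G := 2%:R *: Fe) hS erefl hbr hu hv hw).
exact: (ident2 (G := 2%:R *: Fe) hS erefl hbr hu hv hw ht).
Qed.
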